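(* Let $\alpha$ be irrational with continued fraction denominators $(q_n)_{n\ge1}$, fix $\delta_1>0$ and $0<c<(1/24)^2(1-e^{-\delta_1})$, and let $\delta\ge\delta'\ge\delta_1$. Let $A$ be either an interval of positive length in $\mathbb R/\mathbb Z$, or an annulus $A=B(\ell\alpha,e^{-\ell\delta'})\setminus B(\ell\alpha,ce^{-\ell\delta'})$ with $q_l/2\le\ell<q_l$ for some $l\ge1$. Suppose that for all sufficiently large $m$ a set of integers $\widetilde{\mathcal D}_m[A]\subset\{n:q_m/2\le n<q_m,\ n\alpha\in A\}$ is given with $\frac18|A|q_m\le\#\widetilde{\mathcal D}_m[A]\le|A|q_m$ (e.g. the sets provided by Propositions 3.4 and 3.5). Let $0<a<\min\{2^{-10},2^{-10}\delta\}$ and let $j\ge1$ be an integer with $\frac12\le j\cdot 2^9a\delta^{-1}\le1$. Then for all sufficiently large $k$ there exist subsets $\mathcal D_{k+2i}[A]\subset\widetilde{\mathcal D}_{k+2i}[A]$, $0\le i<j$, such that (i) the closed balls $B\big(n\alpha,\frac{a}{\delta n}\big)$, $n\in\bigcup_{0\le i<j}\mathcal D_{k+2i}[A]$, are pairwise disjoint; (ii) for each $0\le i<j$, $\#\mathcal D_{k+2i}[A]\ge\frac12\#\widetilde{\mathcal D}_{k+2i}[A]\ge\frac1{16}|A|\,q_{k+2i}$.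
   Context: Points are on the circle $\mathbb R/\mathbb Z$; $B(y,r)$ is the closed ball for $\|\cdot\|_{\mathbb R/\mathbb Z}$; $|\cdot|$ is Lebesgue measure; $q_n$ is the denominator of the $n$-th continued fraction convergent of $\alpha$. *)

(* Defs.v *)
From HB Require Import structures.
From mathcomp Require Import all_boot all_order all_algebra.
From mathcomp Require Import all_classical all_reals all_analysis.
Set Implicit Arguments. Unset Strict Implicit. Unset Printing Implicit Defensive.
Import Order.TTheory GRing.Theory Num.Theory.
Local Open Scope classical_set_scope.
Local Open Scope ring_scope.

Section Defs.
Variable R : realType.

Definition frac (x : R) : R := x - (Num.floor x)%:~R.

Fixpoint gauss_it (alpha : R) (n : nat) : R :=
  match n with
  | 0 => frac alpha
  | n'.+1 => frac (1 / gauss_it alpha n')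
  end.

(* partial quotients a_n (n >= 1): alpha = [a_0; a_1, a_2, ...] *)
Definition pquot (alpha : R) (n : nat) : nat :=
  Num.truncn (1 / gauss_it alpha n.-1).

(* (q_n, q_{n-1}) with q_{-1} = 0, q_0 = 1, q_n = a_n q_{n-1} + q_{n-2} *)
Fixpoint cf_qpair (alpha : R) (n : nat) : nat * nat :=
  match n with
  | 0 => (1%N, 0%N)
  | n'.+1 => let p := cf_qpair alpha n' in
             (pquot alpha n * p.1 + p.2, p.1)%N
  end.

Definition cf_q (alpha : R) (n : nat) : nat := (cf_qpair alpha n).1.

Definition circ_norm (x : R) : R := Order.min (frac x) (1 - frac x).

(* Subsets of R/Z are represented by their Z-periodic lifts to R. *)
Definition cball (y r : R) : set R := [set x | circ_norm (x - y) <= r].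

Definition circ_of_itv (I : interval R) : set R :=
  [set x | exists z : int, x + z%:~R \in I].

Definition circ_meas (A : set R) : R :=
  fine (lebesgue_measure (A `&` `[0%R, 1%R[)).

End Defs.

(* Main.v *)
Require Import Defs.
From HB Require Import structures.
From mathcomp Require Import all_boot all_order all_algebra.
From mathcomp Require Import all_classical all_reals all_analysis.
From mathcomp Require Import zify ring lra.
Import Order.TTheory GRing.Theory Num.Theory.
Local Open Scope classical_set_scope.
Local Open Scope ring_scope.
Set Implicit Arguments. Unset Strict Implicit.

Section CF.
Variable R : realType.

Lemma frac_itv (y : R) : 0 <= Defs.frac y < 1.
Proof.
rewrite /Defs.frac; have /andP[h1 h2] := floor_itv y.
apply/andP; split; first by rewrite subr_ge0.
by rewrite ltrBlDl -[_ + 1]addrC -(intrD _ 1) addrC.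
Qed.

Lemma truncn_frac (y : R) : 0 <= y -> y = (Num.truncn y)%:R + Defs.frac y.
Proof.
move=> y0; rewrite /Defs.frac truncn_floor y0.
have f0 : 0 <= Num.floor y by rewrite floor_ge_int.
rewrite -[in RHS](gez0_abs f0) natr_absz gez0_abs //.
by rewrite (ger0_norm f0) addrC subrK.
Qed.

Variable alpha : R.
Hypothesis irr : (@irrational R) alpha.

Fixpoint ppair (n : nat) : int * int :=
  match n with
  | 0 => (Num.floor alpha, 1)
  | n'.+1 => let p := ppair n' in ((pquot alpha n)%:Z * p.1 + p.2, p.1)
  end.

Definition xx n := gauss_it alpha n.
Definition qq n := (cf_qpair alpha n).1.
Definition qq' n := (cf_qpair alpha n).2.
Definition ee n : R := (qq n)%:R * alpha - ((ppair n).1)%:~R.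
Definition ee' n : R := (qq' n)%:R * alpha - ((ppair n).2)%:~R.
Definition det n : int := (qq n)%:Z * (ppair n).2 - (ppair n).1 * (qq' n)%:Z.

Lemma not_rat (p : int) (q : nat) : (0 < q)%N -> q%:R * alpha <> p%:~R.
Proof.
move=> q0 h; apply: irr; apply/rationalP; exists p, q.
by rewrite -h mulrAC divff ?mul1r // pnatr_eq0 -lt0n.
Qed.

Lemma inv_cf n : 0 < xx n < 1 /\ ee n = - xx n * ee' n /\
  (det n = 1 \/ det n = -1) /\ (qq' n <= qq n)%N /\ (0 < qq n)%N.
Proof.
elim: n => [|n [/andP[x0 x1] [he [hd [hq hq0]]]]].
  have /andP[f0 f1] := frac_itv alpha.
  have ex : ee 0 = xx 0 by rewrite /ee /xx /= /Defs.frac /qq /= mul1r.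
  rewrite /det /ee' /qq /qq' /= -/(qq 0) ex mul0r; split.
    rewrite /xx /= f1 andbT lt_neqAle f0 andbT eq_sym; apply/eqP => h0.
    apply: (@not_rat (Num.floor alpha) 1) => //; move: h0; rewrite /Defs.frac mul1r.
    by move/eqP; rewrite subr_eq0 => /eqP.
  split; first by rewrite sub0r mulrNN mulr1.
  by split; [left; rewrite mulr0 subr0|]. 
set A := pquot alpha n.+1.
have hy1 : 1 < 1 / xx n by rewrite ltr_pdivlMr // mul1r.
have hy : 1 / xx n = A%:R + xx n.+1.
  by rewrite /xx /= -/(xx n); apply: truncn_frac; apply: ltW; apply: lt_trans hy1.
have hA : (0 < A)%N by rewrite /A /pquot /= truncn_gt0 -/(xx n) ltW.
have eqq : qq n.+1 = (A * qq n + qq' n)%N by [].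
have eqq' : qq' n.+1 = qq n by [].
have ee'S : ee' n.+1 = ee n by [].
have eeS : ee n.+1 = A%:R * ee n + ee' n.
  rewrite /ee /ee' eqq /= natrD natrM intrD intrM /=. 
  rewrite -/(qq n) -/(qq' n). ring.
have x1S : 0 <= xx n.+1 < 1 by exact: frac_itv.
have eeS2 : ee n.+1 = - xx n.+1 * ee' n.+1.
  rewrite ee'S eeS he.
  have -> : A%:R = 1 / xx n - xx n.+1 by rewrite hy addrK.
  by field; rewrite gt_eqF.
have qS0 : (0 < qq n.+1)%N by rewrite eqq; nia.
split.
  case/andP: x1S => x10 x11; rewrite x11 andbT lt_neqAle x10 andbT eq_sym.
  apply/eqP => h0; move: eeS2; rewrite h0 mulNr mul0r oppr0 /ee => /eqP.
  by rewrite subr_eq0 => /eqP; apply: not_rat.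
split; first exact: eeS2.
split; last by rewrite eqq eqq'; nia.
rewrite /det eqq eqq' /= -/(qq n) -/(qq' n).
have -> : (((A * qq n + qq' n)%N)%:Z * (ppair n).1 - ((A%:Z) * (ppair n).1 + (ppair n).2) * (qq n)%:Z) = - det n.
  rewrite /det PoszD PoszM. ring.
by case: hd => ->; [right|left].
Qed.

Lemma natz_r (n : nat) : (n%:Z)%:~R = n%:R :> R.
Proof. by []. Qed.

Lemma int_facts (u v k Q Q' : int) : u * Q + v * Q' = k -> 0 < k -> k < Q -> 0 <= Q' ->
  (1 <= v /\ u <= 0) \/ (v <= -1 /\ 0 <= u).
Proof.
move=> h k0 kQ q0.
have [u1|u0] := lerP 1 u.
  have : u * Q >= Q by nia.
  have [v1|v0] := lerP 0 v; last by right; split; lia.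
  have : v * Q' >= 0 by nia.
  lia.
have [v1|v0] := lerP 1 v; first by left; lia.
have : u <= 0 by lia. move=> u0'.
have : u * Q <= 0 by nia.
have : v <= 0 by lia. move=> v0'.
have : v * Q' <= 0 by nia.
lia.
Qed.

Lemma ba n (k p : int) : 0 < k -> k < (qq n)%:Z ->
  `|ee' n| <= `|k%:~R * alpha - p%:~R|.
Proof.
move=> k0 kQ.
have [/andP[x0 x1] [he [hd _]]] := inv_cf n.
set P := (ppair n).1; set P' := (ppair n).2.
set d := det n.
have dd : d * d = 1 by rewrite /d; case: hd => ->.
set u := d * (k * P' - p * (qq' n)%:Z).
set v := d * (p * (qq n)%:Z - k * P).
have hk : u * (qq n)%:Z + v * (qq' n)%:Z = k.
  have -> : k = d * d * k by rewrite dd mul1r.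
  by rewrite /u /v /d /det -/P -/P'; ring.
have hp : u * P + v * P' = p.
  have -> : p = d * d * p by rewrite dd mul1r.
  by rewrite /u /v /d /det -/P -/P'; ring.
clearbody u v.
have E : k%:~R * alpha - p%:~R = (v%:~R - u%:~R * xx n) * ee' n :> R.
  rewrite -hk -hp !intrD !intrM -[_ * ee' n]addr0.
  have : u%:~R * (ee n + xx n * ee' n) = 0 by rewrite he mulNr addNr mulr0.
  rewrite /ee /ee' -/P -/P' => <-.
  rewrite !natz_r. ring.
rewrite E normrM ler_peMl //.
have uv := @int_facts _ _ _ _ _ hk k0 kQ ltac:(by []).
case: uv => [[v1 u0]|[v1 u0]].
  have hv : 1 <= v%:~R :> R by rewrite ler1z.
  have hu : u%:~R <= 0 :> R by rewrite lerz0.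
  have hux : u%:~R * xx n <= 0 by rewrite mulr_le0_ge0 // ltW.
  rewrite ger0_norm; lra.
have hv : 1 <= (- v)%:~R :> R by rewrite ler1z; lia.
rewrite intrN in hv.
have hu : 0 <= u%:~R :> R by rewrite ler0z.
have hux : 0 <= u%:~R * xx n by rewrite mulr_ge0 // ltW.
rewrite ler0_norm; lra.
Qed.

Lemma ee'_bound n : 1 / (2 * (qq n)%:R) <= `|ee' n|.
Proof.
have [/andP[x0 x1] [he [hd [hq hq0]]]] := inv_cf n.
have D : (qq n)%:R * ee' n - (qq' n)%:R * ee n = - (det n)%:~R :> R.
  rewrite /ee /ee' /det intrD intrN !intrM !natz_r; ring.
rewrite he in D.
have E2 : ee' n * ((qq n)%:R + (qq' n)%:R * xx n) = - (det n)%:~R by rewrite -D; ring.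
have D1 : `|ee' n| * ((qq n)%:R + (qq' n)%:R * xx n) = 1.
  have pos : 0 <= (qq n)%:R + (qq' n)%:R * xx n :> R by rewrite addr_ge0 // mulr_ge0 // ltW.
  rewrite -[X in _ * X](ger0_norm pos) -normrM E2 normrN.
  by case: hd => ->; rewrite ?normrN normr1.
have Q0 : 0 < (qq n)%:R :> R by rewrite ltr0n.
have Q'Q : (qq' n)%:R <= (qq n)%:R :> R by rewrite ler_nat.
have Q'0 : 0 <= (qq' n)%:R :> R by [].
rewrite ler_pdivrMr ?mulr_gt0 //.
have h2 : (qq' n)%:R * xx n <= (qq n)%:R :> R.
  apply: le_trans Q'Q; rewrite ler_piMr //; exact: ltW.
have := normr_ge0 (ee' n).
nra.
Qed.

Lemma ba2 n (k p : int) : k != 0 -> `|k| < (qq n)%:Z ->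
  1 / (2 * (qq n)%:R) <= `|k%:~R * alpha - p%:~R|.
Proof.
move=> k0 kQ; apply: le_trans (ee'_bound n) _.
have [kp|kn] := ltrP 0 k.
  by apply: ba => //; move: kQ; rewrite gtr0_norm.
have kn' : 0 < - k by rewrite oppr_gt0 lt_neqAle k0.
have -> : k%:~R * alpha - p%:~R = - ((- k)%:~R * alpha - (- p)%:~R) :> R.
  by rewrite !intrN; ring.
rewrite normrN.
apply: ba => //; move: kQ; rewrite ltr0_norm // lt_neqAle k0 kn //.
Qed.
End CF.

Section CN.
Variable R : realType.
Local Notation cn := (@circ_norm R).

Definition np (x : R) : int :=
  if Defs.frac x < 1 - Defs.frac x then Num.floor x else Num.floor x + 1.

Lemma cn_eq x : cn x = `|x - (np x)%:~R|.
Proof.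
rewrite /circ_norm /np /Order.min /=.
have /andP[f0 f1] := frac_itv x.
case: ifP => _; first by rewrite ger0_norm.
rewrite intrD ler0_norm; last by move: f1; rewrite /Defs.frac; lra.
rewrite /Defs.frac; lra.
Qed.

Lemma cn_le x (p : int) : cn x <= `|x - p%:~R|.
Proof.
rewrite /circ_norm.
have /andP[f0 f1] := frac_itv x.
have [d0|d0] := lerP 0 (Num.floor x - p).
  have : 0 <= (Num.floor x - p)%:~R :> R by rewrite ler0z.
  rewrite intrB => h.
  rewrite ge_min; apply/orP; left.
  rewrite ger0_norm; move: f0 f1 h; rewrite /Defs.frac; lra.
have : (Num.floor x - p)%:~R <= -1 :> R.
  have : 1 <= (p - Num.floor x)%:~R :> R by rewrite ler1z; lia.
  rewrite !intrB; lra.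
rewrite intrB => h.
rewrite ge_min; apply/orP; right.
rewrite ler0_norm; move: f0 f1 h; rewrite /Defs.frac; lra.
Qed.

Lemma cn_ge0 x : 0 <= cn x.
Proof. by rewrite cn_eq. Qed.

Lemma cn_N x : cn (- x) = cn x.
Proof.
apply/le_anti/andP; split.
  rewrite [X in _ <= X]cn_eq; apply: le_trans (cn_le _ (- np x)) _.
  by rewrite intrN -opprD normrN.
rewrite [X in _ <= X]cn_eq; apply: le_trans (cn_le _ (- np (-x))) _.
by rewrite intrN -[X in `|X|]opprK opprD opprK normrN.
Qed.

Lemma cn_D x y : cn (x + y) <= cn x + cn y.
Proof.
rewrite (cn_eq x) (cn_eq y); apply: le_trans (cn_le _ (np x + np y)) _.
rewrite intrD; apply: le_trans (ler_normD _ _); rewrite le_eqVlt; apply/orP; left.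
apply/eqP; congr (`|_|); ring.
Qed.

End CN.

Section Count.
Variable R : realType.
Variable alpha : R.
Hypothesis irr : (@irrational R) alpha.
Local Notation cn := (@circ_norm R).
Local Notation q m := (qq alpha m).

Lemma sepq m (k : int) : k != 0 -> `|k| < (q m)%:Z ->
  1 / (2 * (q m)%:R) <= cn (k%:~R * alpha).
Proof. by move=> k0 kq; rewrite cn_eq; apply: ba2. Qed.

Lemma conflict (y1 y2 r1 r2 : R) :
  ~ (cball y1 r1 `&` cball y2 r2 = set0) -> cn (y2 - y1) <= r1 + r2.
Proof.
move=> h; have : cball y1 r1 `&` cball y2 r2 != set0 by apply/eqP.
case/set0P => z [h1 h2]; rewrite /cball /= in h1 h2.
have -> : y2 - y1 = (z - y1) + - (z - y2) by ring.
by apply: le_trans (cn_D _ _) _; rewrite cn_N lerD.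
Qed.

Lemma floor_eq_close (a b : R) : Num.floor a = Num.floor b -> `|a - b| < 1.
Proof.
move=> h; have /andP[a1 a2] := floor_itv a; have /andP[b1 b2] := floor_itv b.
rewrite h intrD in a1 a2; rewrite intrD in b2.
rewrite ltr_norml; apply/andP; split; lra.
Qed.

Lemma count_bound m (s : seq nat) (y L : R) : 0 <= L -> uniq s ->
  (forall n, n \in s -> (n < q m)%N) ->
  (forall n, n \in s -> cn (n%:R * alpha - y) <= L) ->
  (size s)%:R <= 4 * L * (q m)%:R + 1.
Proof.
move=> L0 us sq sL.
have q0 : (0 < q m)%N by have [_ [_ [_ [_ ->]]]] := inv_cf irr m.
have q0' : 0 < (q m)%:R :> R by rewrite ltr0n.
pose t n := (n%:R * alpha - y) - (np (n%:R * alpha - y))%:~R.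
pose f n := `|Num.floor ((t n + L) * (2 * (q m)%:R))|%N.
pose N := `|Num.floor (4 * L * (q m)%:R)|%N.
have tL n : n \in s -> `|t n| <= L by move=> ns; rewrite /t -cn_eq; apply: sL.
have fl n : n \in s -> 0 <= Num.floor ((t n + L) * (2 * (q m)%:R)).
  move=> ns; rewrite floor_ge_int /=; apply: mulr_ge0; last by rewrite mulr_ge0.
  by have := tL n ns; rewrite ler_norml; lra.
have finj : {in s &, injective f}.
  move=> n1 n2 n1s n2s hf.
  have : Posz (f n1) = Posz (f n2) by rewrite hf.
  rewrite /f !gez0_abs ?fl // => /floor_eq_close h.
  apply/eqP; apply: contraTT h => ne; rewrite -leNgt.
  have hk : (n1%:Z - n2%:Z) != 0 by rewrite subr_eq0 eqz_nat.
  have hkq : `|n1%:Z - n2%:Z| < (q m)%:Z.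
    have := sq _ n1s; have := sq _ n2s; lia.
  have := le_trans (sepq hk hkq) (cn_le _ (np (n1%:R * alpha - y) - np (n2%:R * alpha - y))).
  have -> : (t n1 + L) * (2 * (q m)%:R) - (t n2 + L) * (2 * (q m)%:R)
     = ((n1%:Z - n2%:Z)%:~R * alpha - (np (n1%:R * alpha - y) - np (n2%:R * alpha - y))%:~R) * (2 * (q m)%:R).
    rewrite /t !intrB !natz_r; ring.
  rewrite normrM (ger0_norm (_ : 0 <= 2 * (q m)%:R)) ?mulr_ge0 //.
  by rewrite ler_pdivrMr ?mulr_gt0 // mul1r mulrC.
have sub : {subset map f s <= iota 0 N.+1}.
  move=> z /mapP [n ns ->]; rewrite mem_iota /= add0n ltnS.
  have : Num.floor ((t n + L) * (2 * (q m)%:R)) <= Num.floor (4 * L * (q m)%:R).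
    apply: le_floor; have := tL n ns; rewrite ler_norml => /andP[_ h].
    have : t n + L <= 2 * L by lra.
    move=> h2.
    have -> : 4 * L * (q m)%:R = (2 * L) * (2 * (q m)%:R) :> R by ring.
    by apply: ler_wpM2r => //; rewrite mulr_ge0.
  have := fl n ns; rewrite /f /N; lia.
have : (size s <= N.+1)%N.
  by rewrite -(size_map f) -(size_iota 0 N.+1); apply: uniq_leq_size => //; rewrite map_inj_in_uniq.
rewrite -(ler_nat R) => h; apply: le_trans h _.
rewrite -addn1 natrD lerD2r /N.
have h0 : 0 <= Num.floor (4 * L * (q m)%:R) by rewrite floor_ge_int mulr_ge0 // mulr_ge0.
rewrite -[X in X <= _]natz_r gez0_abs //; exact: floor_le.
Qed.

Lemma qpos m : (0 < q m)%N.
Proof. by have [_ [_ [_ [_ ->]]]] := inv_cf irr m. Qed.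

Lemma pq_pos m : (0 < pquot alpha m.+1)%N.
Proof.
have [/andP[x0 x1] _] := inv_cf irr m.
rewrite /pquot /= truncn_gt0 -/(xx alpha m) ler_pdivlMr // mul1r; exact: ltW.
Qed.

Lemma qS m : (q m <= q m.+1)%N.
Proof.
have h : q m.+1 = (pquot alpha m.+1 * q m + qq' alpha m)%N by [].
have := pq_pos m; rewrite h; nia.
Qed.

Lemma q2 m : (2 * q m <= q m.+2)%N.
Proof.
have h : q m.+2 = (pquot alpha m.+2 * q m.+1 + q m)%N by [].
have := pq_pos m.+1; have := qS m; rewrite h; nia.
Qed.

Lemma qmono m1 m2 : (m1 <= m2)%N -> (q m1 <= q m2)%N.
Proof.
move=> /subnK <-; elim: (m2 - m1)%N => [|d IH] //.
by rewrite addSn; apply: leq_trans IH (qS _).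
Qed.

End Count.

Lemma sum_const_seq (R : realType) (T : Type) (s : seq T) (c : R) :
  \sum_(x <- s) c = (size s)%:R * c.
Proof.
elim: s => [|x s IH]; first by rewrite big_nil mul0r.
by rewrite big_cons IH /= -addn1 natrD; ring.
Qed.

Lemma count_union (T U : Type) (l : seq U) (P : U -> pred T) (s : seq T) :
  (count (fun x => has (fun y => P y x) l) s <= \sum_(y <- l) count (P y) s)%N.
Proof.
elim: l => [|y l IH]; first by rewrite big_nil /=; rewrite count_pred0.
rewrite big_cons /=.
apply: leq_trans (_ : count (predU (P y) (fun x => has (fun y0 => P y0 x) l)) s <= _)%N.
  by apply: sub_count => x.
rewrite -(leq_add2r (count (predI (P y) (fun x => has (fun y0 => P y0 x) l)) s)) count_predUI.
rewrite -addnA leq_add2l; exact: leq_trans IH (leq_addr _ _).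
Qed.

Lemma radius_le (R : realType) (a d : R) (n q : nat) : 0 < a -> 0 < d -> (0 < q)%N ->
  q%:R / 2 <= n%:R :> R -> a / (d * n%:R) <= 2 * (a / d) / q%:R.
Proof.
move=> a0 d0 q0 hn.
have q0' : 0 < q%:R :> R by rewrite ltr0n.
have n0 : 0 < n%:R :> R by apply: lt_le_trans hn; rewrite divr_gt0.
have -> : a / (d * n%:R) = (a / d) / n%:R by rewrite invfM mulrA.
have : 0 < a / d by rewrite divr_gt0.
move: (a / d) => e e0.
rewrite ler_pdivrMr // mulrAC ler_pdivlMr //.
have : q%:R <= 2 * n%:R :> R by move: hn; rewrite ler_pdivrMr //; lra.
nra.
Qed.
Lemma final_arith (R : realType) (e Q0 Q L c : R) : 0 < e -> 0 < Q0 -> Q0 <= Q ->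
  L = 2 * e / Q0 + 2 * e / Q -> 1 / (2 * Q) <= L -> c <= 4 * L * Q + 1 ->
  c <= 24 * e * Q / Q0.
Proof.
move=> e0 Q00 QQ hL h1 hc.
have Q0' : 0 < Q by apply: lt_le_trans QQ.
set r := Q / Q0.
have r1 : 1 <= r by rewrite /r ler_pdivlMr // mul1r.
have LQ : L * Q = 2 * e * r + 2 * e by rewrite hL /r; field; rewrite !gt_eqF.
have h2 : 1 <= 2 * (L * Q).
  by move: h1; rewrite ler_pdivrMr ?mulr_gt0 //; lra.
have -> : 24 * e * Q / Q0 = 24 * (e * r) by rewrite /r; ring.
have er : e <= e * r by rewrite ler_peMr // ltW.
have : c <= 4 * (L * Q) + 1 by rewrite mulrA.
lra.
Qed.

Section Levels.
Variable R : realType.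
Variable alpha : R.
Hypothesis irr : (@irrational R) alpha.
Local Notation cn := (@circ_norm R).
Local Notation q m := (qq alpha m).

Lemma nat_half (Q n : nat) : Q%:R / 2 <= n%:R :> R -> (Q <= 2 * n)%N.
Proof. by move=> h; rewrite -(ler_nat R) natrM; move: h; rewrite ler_pdivrMr //; lra. Qed.

Lemma diff_alpha (n1 n2 : nat) : (n2%:Z - n1%:Z)%:~R * alpha = n2%:R * alpha - n1%:R * alpha.
Proof. by rewrite intrB !natz_r mulrBl. Qed.

Lemma same_level m (n1 n2 : nat) (a d : R) : 0 < a -> 0 < d -> a / d < 2 ^- 10 ->
  n1 != n2 ->
  (q m)%:R / 2 <= n1%:R :> R -> (n1 < q m)%N -> (q m)%:R / 2 <= n2%:R :> R -> (n2 < q m)%N ->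
  cball (n1%:R * alpha) (a / (d * n1%:R)) `&` cball (n2%:R * alpha) (a / (d * n2%:R)) = set0.
Proof.
move=> a0 d0 ad n12 h1 h1' h2 h2'; apply: contrapT => /conflict h.
have qp := qpos irr m.
have r1 := radius_le a0 d0 qp h1; have r2 := radius_le a0 d0 qp h2.
have hk : (n2%:Z - n1%:Z) != 0 by rewrite subr_eq0 eqz_nat eq_sym.
have hkq : `|n2%:Z - n1%:Z| < (q m)%:Z by lia.
have := sepq irr hk hkq; rewrite diff_alpha => hs.
have : 1 / (2 * (q m)%:R) <= 2 * (a / d) / (q m)%:R + 2 * (a / d) / (q m)%:R.
  by apply: le_trans hs _; apply: le_trans h _; apply: lerD.
have q0 : 0 < (q m)%:R :> R by rewrite ltr0n.
have e0 : 0 < a / d by rewrite divr_gt0.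
move: ad; have -> : (2:R) ^- 10 = 1/1024 by rewrite -exprVn; field.
move: (a / d) e0 => e e0 he.
have -> : 2 * e / (q m)%:R + 2 * e / (q m)%:R = (4 * e) * (q m)%:R^-1 by ring.
have -> : 1 / (2 * (q m)%:R) = (1/2) * (q m)%:R^-1 :> R by field; rewrite gt_eqF.
rewrite ler_pM2r ?invr_gt0 //; lra.
Qed.

Lemma nat_aux (n n' Q0 Q : nat) : (n < Q0)%N -> (2 * Q0 <= Q)%N -> (Q <= 2 * n')%N ->
  (n' < Q)%N -> (n'%:Z - n%:Z) != 0 /\ (`|n'%:Z - n%:Z| < Q%:Z).
Proof. move=> *; split; [rewrite subr_eq0 eqz_nat; apply/eqP|]; lia. Qed.

Lemma cross_count m0 m (s : seq nat) (n : nat) (a d : R) : 0 < a -> 0 < d ->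
  (2 * q m0 <= q m)%N -> (q m0)%:R / 2 <= n%:R :> R -> (n < q m0)%N -> uniq s ->
  (forall n', n' \in s -> (q m)%:R / 2 <= n'%:R :> R /\ (n' < q m)%N) ->
  (count (fun n' => ~~ `[< cball (n%:R * alpha) (a / (d * n%:R))
        `&` cball (n'%:R * alpha) (a / (d * n'%:R)) = set0 >]) s)%:R
   <= 24 * (a / d) * (q m)%:R / (q m0)%:R.
Proof.
move=> a0 d0 hq hn hn' us hs.
have qp0 := qpos irr m0; have qp := qpos irr m.
set L := 2 * (a / d) / (q m0)%:R + 2 * (a / d) / (q m)%:R.
set bad := fun n' => _.
have e0 : 0 < a / d by rewrite divr_gt0.
have L0 : 0 <= L by rewrite /L addr_ge0 // mulr_ge0 ?mulr_ge0 ?invr_ge0 // ltW.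
have hb : forall n', n' \in seq.filter bad s -> cn (n'%:R * alpha - n%:R * alpha) <= L.
  move=> n'; rewrite mem_filter => /andP[/asboolPn /conflict h n's].
  have [h1 h2] := hs _ n's.
  apply: le_trans h _; apply: lerD; first exact: radius_le.
  exact: radius_le.
have cb := count_bound irr L0 (filter_uniq bad us)
  (fun n' hn => (proj2 (hs n' (mem_subseq (filter_subseq bad s) hn)))) hb.
rewrite size_filter in cb.
have Q0 : 0 < (q m0)%:R :> R by rewrite ltr0n.
have QQ : (q m0)%:R <= (q m)%:R :> R by rewrite ler_nat; lia.
case E : (seq.filter bad s) => [|n' s'].
  move: E => /eqP; rewrite -size_eq0 size_filter => /eqP ->.
  by rewrite mulr_ge0 ?invr_ge0 // mulr_ge0 // mulr_ge0 // ltW.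
have n's : n' \in seq.filter bad s by rewrite E mem_head.
have hL := hb _ n's.
have [h1 h2] := hs n' (mem_subseq (filter_subseq bad s) n's).
have := nat_half h1 => h1n.
have [hk hkq] := nat_aux hn' hq h1n h2.
have := sepq irr hk hkq; rewrite diff_alpha => hs'.
apply: (final_arith e0 Q0 QQ (erefl L)) => //.
exact: le_trans hs' hL.
Qed.
End Levels.


Unset Implicit Arguments.

Theorem proposition3p6 (R : realType) (alpha delta1 c delta delta' : R)
  (A : set R) (Dt : nat -> seq nat) (a : R) (j : nat) :
  (@irrational R) alpha ->
  0 < delta1 ->
  0 < c -> c < (1 / 24) ^+ 2 * (1 - expR (- delta1)) ->
  delta1 <= delta' -> delta' <= delta ->
  ((exists (u v : R) (b1 b2 : bool), u < v /\ v <= u + 1 /\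
       A = circ_of_itv (Interval (BSide b1 u) (BSide b2 v)))
   \/
   (exists l ell : nat, (1 <= l)%N /\
       (cf_q alpha l)%:R / 2 <= ell%:R :> R /\ (ell < cf_q alpha l)%N /\
       A = cball (ell%:R * alpha) (expR (- (ell%:R * delta')))
           `\` cball (ell%:R * alpha) (c * expR (- (ell%:R * delta'))))) ->
  (exists M : nat, forall m : nat, (M <= m)%N ->
     uniq (Dt m) /\
     (forall n : nat, n \in Dt m ->
        (cf_q alpha m)%:R / 2 <= n%:R :> R /\ (n < cf_q alpha m)%N /\
        A (n%:R * alpha)) /\
     1 / 8 * circ_meas A * (cf_q alpha m)%:R <= (size (Dt m))%:R /\
     (size (Dt m))%:R <= circ_meas A * (cf_q alpha m)%:R) ->
  0 < a -> a < Order.min (2 ^- 10) (2 ^- 10 * delta) ->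
  (1 <= j)%N ->
  1 / 2 <= j%:R * 2 ^+ 9 * a / delta -> j%:R * 2 ^+ 9 * a / delta <= 1 ->
  exists K : nat, forall k : nat, (K <= k)%N ->
    exists D : nat -> seq nat,
      (forall i : nat, (i < j)%N ->
         uniq (D i) /\ {subset D i <= Dt (k + 2 * i)%N} /\
         1 / 2 * (size (Dt (k + 2 * i)%N))%:R <= (size (D i))%:R :> R /\
         1 / 16 * circ_meas A * (cf_q alpha (k + 2 * i)%N)%:R
           <= 1 / 2 * (size (Dt (k + 2 * i)%N))%:R) /\
      (forall (i1 i2 n1 n2 : nat), (i1 < j)%N -> (i2 < j)%N ->
         n1 \in D i1 -> n2 \in D i2 -> n1 <> n2 ->
         cball (n1%:R * alpha) (a / (delta * n1%:R))
           `&` cball (n2%:R * alpha) (a / (delta * n2%:R)) = set0).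
Proof.
move=> irr d10 _ _ d1d' d'd _ [M hM] a0 amin _ _ hj2.
have d0 : 0 < delta by apply: lt_le_trans d10 (le_trans d1d' d'd).
have p10 : (2:R) ^- 10 = 1/1024 by rewrite -exprVn; field.
have ad : a / delta < 2 ^- 10.
  move: amin; rewrite lt_min => /andP[_ h].
  by rewrite ltr_pdivrMr // mulrC.
have e0 : 0 < a / delta by rewrite divr_gt0.
have je : j%:R * (a / delta) <= 1 / 512.
  move: hj2; have -> : (2:R) ^+ 9 = 512 by ring.
  have -> : j%:R * 512 * a / delta = 512 * (j%:R * (a / delta)) :> R by ring.
  lra.
exists M => k kM.
pose keep i n' := all (fun i' => all (fun n => `[< cball (n%:R * alpha) (a / (delta * n%:R))
   `&` cball (n'%:R * alpha) (a / (delta * n'%:R)) = set0 >]) (Dt (k + 2 * i')%N)) (iota 0 i).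
exists (fun i => seq.filter (keep i) (Dt (k + 2 * i)%N)).
have hMk i : (M <= k + 2 * i)%N by apply: leq_trans kM (leq_addr _ _).
have cfqE m : cf_q alpha m = qq alpha m by [].
split.
  move=> i ij.
  have [uD [hD [lo hi]]] := hM _ (hMk i).
  split; first exact: filter_uniq.
  split; first by move=> x; rewrite mem_filter => /andP[].
  split; last first.
    move: lo; rewrite -!mulrA; lra.
  rewrite !cfqE in lo hi.
  set s := Dt (k + 2 * i)%N in uD hD lo hi *.
  set Q := qq alpha (k + 2 * i) in lo hi *.
  set Am := circ_meas A in lo hi *.
  pose B n n' := ~~ `[< cball (n%:R * alpha) (a / (delta * n%:R))
        `&` cball (n'%:R * alpha) (a / (delta * n'%:R)) = set0 >].
  have c1 : (count (predC (keep i)) s <=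
      \sum_(i' <- iota 0 i) \sum_(n <- Dt (k + 2 * i')%N) count (B n) s)%N.
    apply: leq_trans (_ : count (fun n' => has (fun i' => has (fun n => B n n') (Dt (k + 2 * i')%N)) (iota 0 i)) s <= _)%N.
      apply: sub_count => n'; rewrite /= /keep -has_predC => /hasP [i' hi' hh].
      by apply/hasP; exists i' => //; move: hh; rewrite /= -has_predC.
    apply: leq_trans (count_union _ _ _) _.
    by apply: leq_sum => i' _; exact: count_union.
  have c2 : (count (predC (keep i)) s)%:R <= i%:R * (24 * (a / delta) * (Am * Q%:R)) :> R.
    apply: le_trans (_ : _ <= (\sum_(i' <- iota 0 i) \sum_(n <- Dt (k + 2 * i')%N) count (B n) s)%:R) _.
      by rewrite ler_nat.
    rewrite natr_sum -[X in _ <= X%:R * _](size_iota 0 i) -sum_const_seq !big_seq.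
    apply: ler_sum => i'; rewrite mem_iota add0n /= => ii'.
    have [uD' [hD' [lo' hi']]] := hM _ (hMk i').
    rewrite !cfqE in hD' lo' hi'.
    set q0 := qq alpha (k + 2 * i') in hD' lo' hi' *.
    rewrite natr_sum.
    apply: le_trans (_ : \sum_(n <- Dt (k + 2 * i')%N) (24 * (a / delta) * Q%:R / q0%:R) <= _).
      rewrite !big_seq; apply: ler_sum => n hn.
      have [hn1 [hn2 _]] := hD' _ hn.
      apply: (cross_count irr) => //.
      + have hlt : ((k + 2 * i').+2 <= k + 2 * i)%N by clear -ii'; lia.
        exact: leq_trans (q2 irr _) (qmono irr hlt).
      + by move=> n' hn'; have [? [? _]] := hD _ hn'; rewrite -cfqE.
    rewrite sum_const_seq.
    have q0p : 0 < q0%:R :> R by rewrite ltr0n; exact: qpos.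
    apply: le_trans (_ : (Am * q0%:R) * (24 * (a / delta) * Q%:R / q0%:R) <= _).
      apply: ler_wpM2r => //; rewrite mulr_ge0 ?invr_ge0 // mulr_ge0 // mulr_ge0 // ltW //.
    rewrite le_eqVlt; apply/orP; left; apply/eqP; field.
    by rewrite (gt_eqF d0) (gt_eqF q0p).
  have ie : i%:R * (a / delta) <= 1 / 512.
    apply: le_trans je; apply: ler_wpM2r; first exact: ltW.
    by rewrite ler_nat ltnW.
  have AQ : 0 <= Am * Q%:R by apply: le_trans hi.
  have c3 : i%:R * (24 * (a / delta) * (Am * Q%:R)) <= 24 / 512 * (Am * Q%:R).
    have -> : i%:R * (24 * (a / delta) * (Am * Q%:R)) = (24 * (i%:R * (a / delta))) * (Am * Q%:R) by ring.
    by apply: ler_wpM2r => //; lra.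
  have sz : (size (seq.filter (keep i) s))%:R + (count (predC (keep i)) s)%:R = (size s)%:R :> R.
    by rewrite size_filter -natrD count_predC.
  move: lo; rewrite -!mulrA; lra.
move=> i1 i2 n1 n2 h1 h2; rewrite !mem_filter => /andP[k1 n1D] /andP[k2 n2D] ne.
case: (ltngtP i1 i2) => [lt|gt|eq].
- move/allP: k2 => /(_ i1); rewrite mem_iota add0n lt /= => /(_ isT) /allP /(_ n1 n1D).
  by move/asboolP.
- move/allP: k1 => /(_ i2); rewrite mem_iota add0n gt /= => /(_ isT) /allP /(_ n2 n2D).
  by move/asboolP; rewrite setIC.
- subst i2.
  have [_ [hD _]] := hM _ (hMk i1).
  have [l1 [u1 _]] := hD _ n1D; have [l2 [u2 _]] := hD _ n2D.
  rewrite cfqE in l1 u1 l2 u2.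
  by apply: (same_level irr (m := (k + 2 * i1)%N)) => //; apply/eqP.
Qed.
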